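(* Let $n\ge 2$, $N=2n^2$, and let $\hat{\mathbf A}$, $\hat{\mathbf D}$ and $\mathbf Q=\begin{pmatrix}\hat{\mathbf A} & \mathbf 0\\ \mathbf I_N-\hat{\mathbf A} & \hat{\mathbf D}\end{pmatrix}$ be as in the context. For an $N\times N$ matrix $\mathbf T$ and $\epsilon>0$ put $$\mathbf G=\begin{pmatrix}\mathbf 0_{N\times N} & \mathbf T\\ \mathbf 0_{N\times N} & -\mathbf T\end{pmatrix},\qquad \mathbf Q_{\epsilon,\mathbf T}=\mathbf Q+\epsilon\mathbf G .$$ If $\mathbf T=\mathbf I_N-\hat{\mathbf D}$ (or $\mathbf T=\mathbf I_N-\hat{\mathbf D}^{-1}$), then $\mathbf Q_{\epsilon,\mathbf T}$ has exactly three linearly independent right eigenvectors for the eigenvalue $1$, and these are exactly the right eigenvectors of $\mathbf Q$ for the eigenvalue $1$, namely $\begin{pmatrix}\mathbf 1_N\\ \mathbf 0_N\end{pmatrix}$, $\begin{pmatrix}\mathbf 0_N\\ \bar{\mathbf v}^+\end{pmatrix}$, $\begin{pmatrix}\mathbf 0_N\\ \bar{\mathbf v}^-\end{pmatrix}$, where $\bar{\mathbf v}^\pm$ span the eigenspace of $\hat{\mathbf D}$ for the eigenvalue $1$.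
   Context: Notation: $n\ge2$, $N=2n^2$. $\hat{\mathbf A}$ is an $N\times N$ row-stochastic SIA matrix (so $1$ is a simple eigenvalue and all others have modulus $<1$). For $l=1,\dots,n$, $\mathbf D^l$ is an $n\times n$ column-stochastic matrix, and $\hat{\mathbf D}$ is the $N\times N$ matrix partitioned into an $n\times n$ array of $2n\times 2n$ blocks whose $(i,l)$ block equals $\frac1n\,\mathrm{diag}(\mathbf D^l,\mathbf D^l)$ for all $i,l$; it is assumed that $\frac1n\sum_l\mathbf D^l$ has $1$ as a simple eigenvalue, so that the eigenvalue $1$ of $\hat{\mathbf D}$ has a two-dimensional eigenspace spanned by two nonnegative vectors $\bar{\mathbf v}^+$ (supported on the coordinates $j$ with $1\le j \bmod 2n\le n$) and $\bar{\mathbf v}^-$ (supported on the coordinates $j$ with $n+1\le j\bmod 2n\le 2n$, where residue $0$ is read as $2n$). $\mathbf 1_N,\mathbf 0_N$ are the all-ones and zero vectors. *)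

(* Defs.v *)
From HB Require Import structures.
From mathcomp Require Import all_boot all_order all_algebra.
From mathcomp Require Import all_classical all_reals all_analysis.
Set Implicit Arguments. Unset Strict Implicit. Unset Printing Implicit Defensive.
Import Order.TTheory GRing.Theory Num.Theory.
Import numFieldNormedType.Exports.
Local Open Scope classical_set_scope.
Local Open Scope ring_scope.

(* Conventions: indices are 0-based.  A coordinate p : 'I_N (N = 2n^2)
   corresponds to the paper's index j = p+1, so "1 <= j mod 2n <= n" reads
   "p %% 2n < n". *)

Definition row_stochastic (R : realType) (m : nat) (A : 'M[R]_m) : Prop :=
  (forall i j, 0 <= A i j) /\ (forall i, \sum_j A i j = 1).

Definition col_stochastic (R : realType) (m : nat) (A : 'M[R]_m) : Prop :=
  (forall i j, 0 <= A i j) /\ (forall j, \sum_i A i j = 1).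

Definition SIA (R : realType) (m : nat) (A : 'M[R]_m) : Prop :=
  row_stochastic A /\
  exists c : 'I_m -> R, forall i j,
    ((fun k : nat => (A ^+ k) i j) : R^nat) @ \oo --> (c j : R).

Definition dval (R : realType) (n : nat) (D : 'I_n -> 'M[R]_n)
    (l r s : nat) : R :=
  match insub l, insub r, insub s with
  | Some l', Some r', Some s' => D l' r' s'
  | _, _, _ => 0
  end.

(* \hat D : n x n array of 2n x 2n blocks, block (i,l) = (1/n) diag(D^l, D^l) *)
Definition Dhat (R : realType) (n : nat) (D : 'I_n -> 'M[R]_n)
    : 'M[R]_(2 * n ^ 2) :=
  \matrix_(p, q)
    let l := (q %/ (2 * n))%N in
    let r := (p %% (2 * n))%N in
    let s := (q %% (2 * n))%N in
    if (r < n)%N && (s < n)%N then n%:R^-1 * dval D l r s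
    else if (n <= r)%N && (n <= s)%N then n%:R^-1 * dval D l (r - n) (s - n)
    else 0.

Definition Dmean (R : realType) (n : nat) (D : 'I_n -> 'M[R]_n) : 'M[R]_n :=
  n%:R^-1 *: \sum_l D l.

Definition simple_eig1 (R : realType) (m : nat) (M : 'M[R]_m) : Prop :=
  root (char_poly M) 1 /\ ~~ ((('X - 1%:P) ^+ 2) %| char_poly M).

Definition Qmat (R : realType) (N : nat) (A D : 'M[R]_N) : 'M[R]_(N + N) :=
  block_mx A 0 (1%:M - A) D.

Definition Gmat (R : realType) (N : nat) (T : 'M[R]_N) : 'M[R]_(N + N) :=
  block_mx 0 T 0 (- T).

Definition Qeps (R : realType) (N : nat) (A D T : 'M[R]_N) (eps : R)
  : 'M[R]_(N + N) := Qmat A D + eps *: Gmat T.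

(* Main.v *)
Require Import Defs.
From HB Require Import structures.
From mathcomp Require Import all_boot all_order all_algebra.
From mathcomp Require Import all_classical all_reals all_analysis.
From mathcomp Require Import zify.
Import Order.TTheory GRing.Theory Num.Theory.
Import numFieldNormedType.Exports.
Set Implicit Arguments. Unset Strict Implicit. Unset Printing Implicit Defensive.
Local Open Scope classical_set_scope.
Local Open Scope ring_scope.

Lemma sia_fix (R : realType) m (A : 'M[R]_m) (hA : SIA A) (x : 'cV[R]_m) :
  A *m x = x -> exists a : R, x = a *: const_mx 1.
Proof.
move=> Ax; case: hA => _ [c hc].
have pw : forall k, A ^+ k *m x = x.
  elim=> [|k IH]; first by rewrite expr0 mul1mx.
  by rewrite exprS -mulmxA IH Ax.
exists (\sum_j c j * x j 0); apply/matrixP => i j; rewrite !mxE mulr1 (ord1 j).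
have h1 : ((fun k : nat => \sum_j0 (A ^+ k) i j0 * x j0 0) : R^nat) @ \oo --> \sum_j0 c j0 * x j0 0.
  apply: (cvg_big (P := xpredT) (op := +%R) (x0 := 0)) => //.
    exact: add_continuous.
  move=> j0 _; apply: cvgMr_tmp; exact: hc.
have h2 : ((fun k : nat => \sum_j0 (A ^+ k) i j0 * x j0 0) : R^nat) = fun=> x i 0.
  by apply: funext => k; rewrite -{2}(pw k) mxE.
rewrite h2 in h1.
have h3 := cvg_lim (@Rhausdorff R) h1.
by rewrite -h3 lim_cst.
Qed.

Lemma right_fix (F : fieldType) m (M : 'M[F]_m) :
  root (char_poly M) 1 -> exists2 u : 'cV[F]_m, u != 0 & M *m u = u.
Proof.
rewrite -eigenvalue_root_char => /eigenvalueP [v vM v0].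
have d0 : \det (1%:M - M) == 0.
  apply/det0P; exists v => //; by rewrite mulmxBr mulmx1 vM scale1r subrr.
have : \det (1%:M - M)^T == 0 by rewrite det_tr.
case/det0P => w w0 wM.
exists w^T; first by rewrite trmx_eq0.
apply: trmx_inj; rewrite trmx_mul trmxK.
move: wM; rewrite linearB /= tr_scalar_mx mulmxBr mulmx1 => /eqP.
by rewrite subr_eq0 => /eqP <-.
Qed.

Lemma sum_split (R : nmodType) n (G : nat -> R) :
  \sum_(q < 2 * n ^ 2) G q = \sum_(l < n) \sum_(s < 2 * n) G (l * (2 * n) + s)%N.
Proof.
rewrite -(big_mkord xpredT G) (_ : (2 * n ^ 2 = n * (2 * n))%N); last by lia.
rewrite big_nat_mul big_mkord; apply: eq_bigr => l _.
rewrite -{1}[(l * (2 * n))%N]add0n big_addn mulSn addnK big_mkord.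
by apply: eq_bigr => s _; rewrite addnC.
Qed.

Definition uval (R : ringType) n (u : 'cV[R]_n) (r : nat) : R :=
  match insub r with Some r' => u r' 0 | None => 0 end.

Lemma uval_ge (R : ringType) n (u : 'cV[R]_n) r : (n <= r)%N -> uval u r = 0.
Proof. by move=> h; rewrite /uval insubN // -leqNgt. Qed.

Lemma uval_val (R : ringType) n (u : 'cV[R]_n) (i : 'I_n) : uval u i = u i 0.
Proof. by rewrite /uval valK. Qed.

Lemma dval_val (R : realType) n (D : 'I_n -> 'M[R]_n) (l r s : 'I_n) :
  dval D l r s = D l r s.
Proof. by rewrite /dval !valK. Qed.

Lemma dval_ge (R : realType) n (D : 'I_n -> 'M[R]_n) l r s :
  (n <= s)%N -> dval D l r s = 0.
Proof.
move=> h; rewrite /dval; case: insub => // ?; case: insub => // ?.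
by rewrite insubN // -leqNgt.
Qed.

Lemma divmod_l n l s : (s < 2 * n)%N ->
  ((l * (2 * n) + s) %/ (2 * n) = l)%N /\ ((l * (2 * n) + s) %% (2 * n) = s)%N.
Proof.
move=> h; have n0 : (0 < 2 * n)%N by lia.
by rewrite divnMDl // modnMDl divn_small // modn_small // addn0.
Qed.

Definition yp (R : ringType) n (u : 'cV[R]_n) : 'cV[R]_(2 * n ^ 2) :=
  \col_p uval u (p %% (2 * n)).
Definition ym (R : ringType) n (u : 'cV[R]_n) : 'cV[R]_(2 * n ^ 2) :=
  \col_p (if (n <= p %% (2 * n))%N then uval u (p %% (2 * n) - n) else 0).


Lemma sum_block (R : nmodType) n (H : nat -> nat -> R) :
  \sum_(q < 2 * n ^ 2) H (q %/ (2 * n))%N (q %% (2 * n))%N =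
  \sum_(l < n) (\sum_(s < n) H l s + \sum_(s < n) H l (n + s)%N).
Proof.
rewrite (sum_split n (fun q => H (q %/ (2 * n))%N (q %% (2 * n))%N)).
apply: eq_bigr => l _.
have e : (2 * n = n + n)%N by lia.
rewrite [in LHS]e big_split_ord /=.
rewrite -e; congr (_ + _); apply: eq_bigr => s _.
  have hs : (s < 2 * n)%N by rewrite e ltn_addr.
  by case: (divmod_l l hs) => -> ->.
have hs : (n + s < 2 * n)%N by rewrite e ltn_add2l.
by case: (divmod_l l hs) => -> ->.
Qed.

Lemma core (R : realType) n (D : 'I_n -> 'M[R]_n) (u : 'cV[R]_n) (r : 'I_n) :
  Dmean D *m u = u ->
  \sum_(l < n) \sum_(s < n) n%:R^-1 * dval D l r s * uval u s = uval u r.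
Proof.
move=> hu; rewrite uval_val -{2}hu mxE exchange_big /=.
apply: eq_bigr => s _; rewrite /Dmean !mxE summxE mulr_sumr mulr_suml.
by apply: eq_bigr => l _; rewrite dval_val uval_val.
Qed.

Lemma Dhat_yp (R : realType) n (D : 'I_n -> 'M[R]_n) (u : 'cV[R]_n) :
  Dmean D *m u = u -> Dhat D *m yp u = yp u.
Proof.
move=> hu; apply/matrixP => p j; rewrite (ord1 j) !mxE.
under eq_bigr do rewrite !mxE.
rewrite (sum_block n (fun l s => (if ((p %% (2 * n)) < n)%N && (s < n)%N
      then n%:R^-1 * dval D l (p %% (2 * n)) s
      else
       if (n <= (p %% (2 * n)))%N && (n <= s)%N
       then n%:R^-1 * dval D l ((p %% (2 * n)) - n) (s - n)
       else 0) * uval u s)).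
case: (ltnP (p %% (2 * n)) n) => hr.
  rewrite -(core (Ordinal hr) hu); apply: eq_bigr => l _.
  rewrite [X in _ + X]big1 ?addr0; last first.
    by move=> s _; rewrite /= ltnNge leq_addr /= mul0r.
  by apply: eq_bigr => s _; rewrite ltn_ord.
rewrite uval_ge // big1 // => l _; rewrite !big1 ?addr0 // => s _.
  by rewrite uval_ge ?leq_addr // mulr0.
by rewrite /= [(n <= s)%N]leqNgt ltn_ord /= mul0r.
Qed.

Lemma Dhat_ym (R : realType) n (D : 'I_n -> 'M[R]_n) (u : 'cV[R]_n) :
  (0 < n)%N -> Dmean D *m u = u -> Dhat D *m ym u = ym u.
Proof.
move=> n0 hu; apply/matrixP => p j; rewrite (ord1 j) !mxE.
under eq_bigr do rewrite !mxE.
rewrite (sum_block n (fun l s => (if ((p %% (2 * n)) < n)%N && (s < n)%N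
      then n%:R^-1 * dval D l (p %% (2 * n)) s
      else
       if (n <= (p %% (2 * n)))%N && (n <= s)%N
       then n%:R^-1 * dval D l ((p %% (2 * n)) - n) (s - n)
       else 0) * (if (n <= s)%N then uval u (s - n) else 0))).
case: (ltnP (p %% (2 * n)) n) => hr.
  rewrite big1 // => l _; rewrite !big1 ?addr0 // => s _.
    by rewrite /= ltnNge leq_addr /= mul0r.
  by rewrite [(n <= s)%N]leqNgt ltn_ord /= mulr0.
have hr' : (p %% (2 * n) - n < n)%N.
  have : (p %% (2 * n) < 2 * n)%N by rewrite ltn_pmod // muln_gt0.
  lia.
rewrite -(core (Ordinal hr') hu); apply: eq_bigr => l _.
rewrite big1 ?add0r; last by move=> s _; rewrite [(n <= s)%N]leqNgt ltn_ord mulr0.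
apply: eq_bigr => s _; rewrite leq_addr ltnNge leq_addr /= addKn //.
Qed.


Lemma indep_helper (R : realType) N (vp vm : 'cV[R]_N) (p0 p1 : 'I_N)
  (h0 : vp p0 0 != 0) (h0' : vm p0 0 = 0) (h1 : vm p1 0 != 0) (h1' : vp p1 0 = 0)
  (a b c : R) :
  a *: (col_mx (const_mx 1) 0 : 'cV[R]_(N + N)) + b *: col_mx 0 vp + c *: col_mx 0 vm = 0 ->
  [/\ a = 0, b = 0 & c = 0].
Proof.
rewrite !scale_col_mx !add_col_mx !scaler0 !addr0 !add0r -col_mx0.
case/eq_col_mx => ha hbc.
have ea : a = 0 by move/matrixP: ha => /(_ p0 0); rewrite !mxE mulr1.
have eb : b = 0.
  move/matrixP: hbc => /(_ p0 0); rewrite !mxE h0' mulr0 addr0 => /eqP.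
  by rewrite mulf_eq0 (negPf h0) orbF => /eqP.
have ec : c = 0.
  move/matrixP: hbc => /(_ p1 0); rewrite !mxE h1' mulr0 add0r => /eqP.
  by rewrite mulf_eq0 (negPf h1) orbF => /eqP.
by [].
Qed.

Theorem lemma2 (R : realType) (n : nat) (hn : (2 <= n)%N)
  (A : 'M[R]_(2 * n ^ 2)) (hA : SIA A)
  (D : 'I_n -> 'M[R]_n) (hD : forall l, col_stochastic (D l))
  (hDm : simple_eig1 (Dmean D))
  (vp vm : 'cV[R]_(2 * n ^ 2))
  (hvp0 : forall p, 0 <= vp p 0) (hvm0 : forall p, 0 <= vm p 0)
  (hvpsupp : forall p : 'I_(2 * n ^ 2), (n <= p %% (2 * n))%N -> vp p 0 = 0)
  (hvmsupp : forall p : 'I_(2 * n ^ 2), (p %% (2 * n) < n)%N -> vm p 0 = 0)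
  (hspan : forall y : 'cV[R]_(2 * n ^ 2),
      Dhat D *m y = y <-> exists a b : R, y = a *: vp + b *: vm)
  (T : 'M[R]_(2 * n ^ 2))
  (hT : T = 1%:M - Dhat D \/ T = 1%:M - invmx (Dhat D))
  (eps : R) (heps : 0 < eps) :
  let e1 : 'cV[R]_(2 * n ^ 2 + 2 * n ^ 2) := col_mx (const_mx 1) 0 in
  let e2 : 'cV[R]_(2 * n ^ 2 + 2 * n ^ 2) := col_mx 0 vp in
  let e3 : 'cV[R]_(2 * n ^ 2 + 2 * n ^ 2) := col_mx 0 vm in
  (forall w : 'cV[R]_(2 * n ^ 2 + 2 * n ^ 2), Qeps A (Dhat D) T eps *m w = w <-> Qmat A (Dhat D) *m w = w) /\
  (forall w : 'cV[R]_(2 * n ^ 2 + 2 * n ^ 2), Qmat A (Dhat D) *m w = w <->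
      exists a b c : R, w = a *: e1 + b *: e2 + c *: e3) /\
  \rank (row_mx (row_mx e1 e2) e3) = 3%N.

Proof.
move=> e1 e2 e3.
set N := (2 * n ^ 2)%N in A hA vp vm hvp0 hvm0 hvpsupp hvmsupp hspan T hT e1 e2 e3 *.
set Dh := Dhat D in hspan hT *.
have n0 : (0 < n)%N by lia.
case: (right_fix hDm.1) => u u0 hu.
case/matrix0Pn: u0 => k [j ukj]; rewrite (ord1 j) in ukj.
have kN : (k < N)%N by rewrite /N; have := ltn_ord k; nia.
have nkN : (n + k < N)%N by rewrite /N; have := ltn_ord k; nia.
pose p0 : 'I_N := Ordinal kN.
pose p1 : 'I_N := Ordinal nkN.
have r0 : (p0 %% (2 * n) = k)%N by rewrite /= modn_small //; have := ltn_ord k; lia.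
have r1 : (p1 %% (2 * n) = n + k)%N by rewrite /= modn_small //; have := ltn_ord k; lia.
have [a1 [b1 ey1]] := (hspan (yp u)).1 (Dhat_yp hu).
have [a2 [b2 ey2]] := (hspan (ym u)).1 (Dhat_ym n0 hu).
have vm0 : vm p0 0 = 0 by apply: hvmsupp; rewrite r0.
have vp1 : vp p1 0 = 0 by apply: hvpsupp; rewrite r1 leq_addr.
have vp0 : vp p0 0 != 0.
  move/matrixP: ey1 => /(_ p0 0); rewrite !mxE r0 uval_val vm0 mulr0 addr0.
  by move=> e; apply: contra ukj => /eqP z; rewrite e z mulr0.
have vm1 : vm p1 0 != 0.
  move/matrixP: ey2 => /(_ p1 0); rewrite !mxE r1 leq_addr addKn uval_val vp1 mulr0 add0r.
  by move=> e; apply: contra ukj => /eqP z; rewrite e z mulr0.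
have F1 : forall x y : 'cV[R]_N, Qmat A Dh *m col_mx x y = col_mx (A *m x) (x - A *m x + Dh *m y).
  by move=> x y; rewrite /Qmat mul_block_col mul0mx addr0 mulmxBl mul1mx.
have F2 : forall x y : 'cV[R]_N, Qeps A Dh T eps *m col_mx x y =
    col_mx (A *m x + eps *: (T *m y)) (x - A *m x + Dh *m y - eps *: (T *m y)).
  move=> x y; rewrite /Qeps mulmxDl F1 -scalemxAl /Gmat mul_block_col !mul0mx !add0r.
  by rewrite scale_col_mx add_col_mx mulNmx scalerN.
have Ty0 : forall y : 'cV[R]_N, Dh *m y = y -> T *m y = 0.
  move=> y hy; case: hT => ->; rewrite mulmxBl mul1mx; apply/eqP; rewrite subr_eq0; apply/eqP.
    by rewrite hy.
  case: (boolP (Dh \in unitmx)) => hu'.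
    by rewrite -{2}hy mulmxA mulVmx // mul1mx.
  by rewrite invmx_out ?inE // hy.
have A1 : A *m (const_mx 1 : 'cV[R]_N) = const_mx 1.
  apply/matrixP => i j'; rewrite !mxE; case: hA => [[_ hs] _].
  by rewrite -[RHS](hs i); apply: eq_bigr => l _; rewrite mxE mulr1.
split; [|split].
- move=> w; rewrite -[w]vsubmxK; move: (usubmx w) (dsubmx w) => x y.
  rewrite F1 F2; split.
    case/eq_col_mx => h1 h2.
    have Ax : A *m x = x - eps *: (T *m y) by rewrite -{2}h1 addrK.
    have Dy : Dh *m y = y.
      move: h2; rewrite Ax opprB (addrC (eps *: _)) addrA subrr add0r.
      by rewrite (addrC (eps *: _)) addrK.
    by rewrite Ty0 // scaler0 subr0 in Ax; rewrite Ax subrr add0r Dy.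
  case/eq_col_mx => h1 h2.
  have Dy : Dh *m y = y by move: h2; rewrite h1 subrr add0r.
  by rewrite Ty0 // scaler0 addr0 subr0 h1 subrr add0r Dy.
- move=> w; split.
    rewrite -[w]vsubmxK; move: (usubmx w) (dsubmx w) => x y.
    rewrite F1; case/eq_col_mx => h1 h2.
    have Dy : Dh *m y = y by move: h2; rewrite h1 subrr add0r.
    have [a ->] := sia_fix hA h1.
    have [b [c ->]] := (hspan y).1 Dy.
    exists a, b, c; rewrite /e1 /e2 /e3 !scale_col_mx !add_col_mx !scaler0 !addr0 !add0r.
    by [].
  case=> a [b [c ->]]; rewrite /e1 /e2 /e3 !scale_col_mx !add_col_mx !scaler0 !addr0 !add0r.
  rewrite F1 -scalemxAr A1 subrr add0r.
  have : Dh *m (b *: vp + c *: vm) = b *: vp + c *: vm by apply/hspan; exists b, c.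
  by move=> ->.
- set M := row_mx (row_mx e1 e2) e3.
  suff : row_free M^T by rewrite /row_free mxrank_tr => /eqP.
  rewrite -kermx_eq0; apply/eqP/row_matrixP => i; rewrite row0.
  set v := row i (kermx M^T).
  have hv : v *m M^T = 0 by rewrite /v -row_mul mulmx_ker row0.
  have hv' : M *m v^T = 0 by rewrite -[M]trmxK -trmx_mul hv trmx0.
  move: hv'; rewrite -[v^T]vsubmxK -[usubmx v^T]vsubmxK /M !mul_row_col.
  rewrite (mx11_scalar (usubmx (usubmx v^T))) (mx11_scalar (dsubmx (usubmx v^T))).
  rewrite (mx11_scalar (dsubmx v^T)) !mul_mx_scalar.
  case/(indep_helper vp0 vm0 vm1 vp1) => za zb zc.
  apply: trmx_inj; rewrite trmx0 -[v^T]vsubmxK -[usubmx v^T]vsubmxK.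
  rewrite (mx11_scalar (usubmx (usubmx v^T))) (mx11_scalar (dsubmx (usubmx v^T))).
  rewrite (mx11_scalar (dsubmx v^T)) za zb zc.
  apply/matrixP => p q; rewrite !mxE; case: (fintype.split p) => i1; rewrite !mxE ?(ord1 q) ?(ord1 i1) // ; case: (fintype.split i1) => i2; by rewrite !mxE ?(ord1 q) ?(ord1 i2) ?mulr0n.
Qed.
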